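(* Let $m\in\mathbb{N}$ with $m\ge1$. (a) If $m$ is odd, then $F_m$ is $\mathbb{Z}_m$-cordial. Moreover, $F_n$ is $\mathbb{Z}_m$-cordial for all $n\in\mathbb{N}$ if and only if $F_1,F_2,\ldots,F_{m-1}$ are $\mathbb{Z}_m$-cordial. (b) If $m$ is even, then $F_{2m}$ is $\mathbb{Z}_m$-cordial. Moreover, $F_n$ is $\mathbb{Z}_m$-cordial for all $n\in\mathbb{N}$ if and only if $F_1,F_2,\ldots,F_{2m-1}$ are $\mathbb{Z}_m$-cordial. (c) If $m$ is even but $4\nmid m$, then $F_m$ is not $\mathbb{Z}_m$-cordial.
   Context: $\mathbb{N}=\mathbb{Z}_{\ge0}$. Graphs are finite, simple and undirected. For $n\in\mathbb{N}$, the friendship graph $F_n$ is the union of $n$ copies of the triangle $C_3$ joined at a single common (central) vertex. For an abelian group $A$ and a graph $G=(V,E)$, a vertex labeling $\ell:V\to A$ induces an edge labeling $\ell(\{v_1,v_2\})=\ell(v_1)+\ell(v_2)$. Let $f_V(a)=|\{v\in V:\ell(v)=a\}|$ and $f_E(a)=|\{e\in E:\ell(e)=a\}|$. The labeling is $A$-cordial if $|f_V(a_1)-f_V(a_2)|\le 1$ and $|f_E(a_1)-f_E(a_2)|\le 1$ for all $a_1,a_2\in A$; $G$ is $A$-cordial if it admits an $A$-cordial labeling. *)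

(* Defs.v *)
From HB Require Import structures.
From mathcomp Require Import all_boot all_algebra.
Set Implicit Arguments. Unset Strict Implicit. Unset Printing Implicit Defensive.
Import GRing.Theory.
Local Open Scope ring_scope.

Definition edges (V : finType) (e : rel V) : {set {set V}} :=
  [set [set x; y] | x in V, y in V & (x != y) && e x y].

Definition cordial_labeling (A : finZmodType) (V : finType) (e : rel V)
    (l : V -> A) : Prop :=
  (forall a1 a2 : A,
      #|[set v | l v == a1]| <= #|[set v | l v == a2]|.+1)%N /\
  (forall a1 a2 : A,
      #|[set S in edges e | (\sum_(v in S) l v)%R == a1]|
        <= #|[set S in edges e | (\sum_(v in S) l v)%R == a2]|.+1)%N.

Definition cordial (A : finZmodType) (V : finType) (e : rel V) : Prop :=
  exists l : V -> A, cordial_labeling e l.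

(* Z_m for m >= 1: the ordinals 'I_m (written 'I_(m.-1.+1), equal to 'I_m
   when m >= 1) with addition modulo m. *)
Definition Zmod (m : nat) : finZmodType := 'I_(m.-1.+1).

(* Friendship graph F_n on vertices 0..2n: vertex 0 is the center, and for
   i < n the vertices 2i+1, 2i+2 form the i-th triangle with 0. *)
Definition friendship (n : nat) : rel 'I_(2 * n).+1 :=
  fun x y => (x != y) &&
    [|| (nat_of_ord x == 0)%N, (nat_of_ord y == 0)%N
      | ((x.-1)./2 == (y.-1)./2)%N ].

Definition Zm_cordial_friendship (m n : nat) : Prop :=
  cordial (Zmod m) (@friendship n).

(* Main.v *)
Require Import Defs.
From mathcomp Require Import all_boot all_algebra zify.
Set Implicit Arguments. Unset Strict Implicit. Unset Printing Implicit Defensive.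
Import GRing.Theory.


Lemma sum_pairs (F : nat -> nat) n :
  \sum_(0 <= k < (2 * n).+1) F k = F 0 + \sum_(i < n) (F i.*2.+1 + F i.*2.+2).
Proof.
elim: n => [|n IH]; first by rewrite big_nat1 big_ord0 addn0.
rewrite big_ord_recr /= addnA -IH.
have -> : (2 * n.+1).+1 = ((2 * n).+1).+1.+1 by lia.
rewrite big_nat_recr //= big_nat_recr //= -addnA; congr (_ + (_ + _)).
- congr (F _); lia.
- congr (F _); lia.
Qed.

Lemma card_filter (T : finType) (E : {set T}) (P : pred T) :
  #|[set x in E | P x]| = \sum_(x in E) (P x : nat).
Proof.
rewrite -sum1_card big_mkcond [RHS]big_mkcond /=.
apply: eq_bigr => x _; rewrite !inE.
by case: (x \in E); case: (P x).
Qed.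

Lemma card_set_pred (T : finType) (P : pred T) :
  #|[set x | P x]| = \sum_(x : T) (P x : nat).
Proof.
rewrite -sum1_card big_mkcond /=.
apply: eq_bigr => x _; rewrite !inE.
by case: (P x).
Qed.

Lemma sum_eq1 (T : finType) (a : T) : \sum_(x : T) (x == a : nat) = 1.
Proof.
rewrite (bigD1 a) //= eqxx big1 // => x /negbTE -> //.
Qed.

Lemma sum_eq1' (T : finType) (a : T) : \sum_(x : T) (a == x : nat) = 1.
Proof. by rewrite -(sum_eq1 a); apply: eq_bigr => x _; rewrite eq_sym. Qed.

Lemma sum_inj1 (T : finType) (h : T -> T) (a : T) :
  injective h -> \sum_(x : T) (h x == a : nat) = 1.
Proof.
move=> hi; rewrite -(sum_eq1 a).
by rewrite (reindex_inj hi (P := xpredT) (F := fun y => (y == a : nat))).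
Qed.


Section Counts.
Variable A : finZmodType.

Definition vA n (i : nat) : 'I_(2*n).+1 := inord i.*2.+1.
Definition vB n (i : nat) : 'I_(2*n).+1 := inord i.*2.+2.

Lemma vAE n (i : 'I_n) : nat_of_ord (vA n i) = i.*2.+1.
Proof. rewrite /vA inordK //; have := ltn_ord i; lia. Qed.
Lemma vBE n (i : 'I_n) : nat_of_ord (vB n i) = i.*2.+2.
Proof. rewrite /vB inordK //; have := ltn_ord i; lia. Qed.

Definition pv n (l : 'I_(2*n).+1 -> A) : seq (A * A) :=
  mkseq (fun i => (l (vA n i), l (vB n i))) n.

Definition vc (c : A) (p : seq (A * A)) (a : A) : nat :=
  ((c == a) + \sum_(q <- p) ((q.1 == a) + (q.2 == a)))%N.
Definition ec (c : A) (p : seq (A * A)) (a : A) : nat :=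
  (\sum_(q <- p) ((c + q.1 == a)%R + (c + q.2 == a)%R + (q.1 + q.2 == a)%R))%N.

Lemma sum_mkseq (f : nat -> A * A) (G : A * A -> nat) n :
  \sum_(q <- mkseq f n) G q = \sum_(i < n) G (f i).
Proof. by rewrite /mkseq big_map -{1}(subn0 n) -/(index_iota 0 n) big_mkord. Qed.

Lemma vcount n (l : 'I_(2*n).+1 -> A) a :
  #|[set v | l v == a]| = vc (l ord0) (pv l) a.
Proof.
rewrite card_set_pred.
transitivity (\sum_(v < (2*n).+1) (l (inord v) == a : nat)).
  by apply: eq_bigr => v _; rewrite inord_val.
rewrite -(big_mkord xpredT (fun k => (l (inord k) == a : nat))) sum_pairs.
rewrite /vc /pv sum_mkseq /=.
have -> : (inord 0 : 'I_(2*n).+1) = ord0 by apply: val_inj; rewrite /= inordK.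
by [].
Qed.

Definition gE n (t : 'I_n * 'I_3) : {set 'I_(2*n).+1} :=
  match val t.2 with
  | 0 => [set ord0; vA n t.1]
  | 1 => [set ord0; vB n t.1]
  | _ => [set vA n t.1; vB n t.1]
  end.

Lemma vdecomp n (v : 'I_(2*n).+1) : nat_of_ord v != 0 ->
  exists i : 'I_n, nat_of_ord i = (nat_of_ord v).-1./2 /\ (v = vA n i \/ v = vB n i).
Proof.
move=> nz.
have lt : (nat_of_ord v).-1./2 < n.
  have := ltn_ord v; move: nz; rewrite -divn2; lia.
exists (Ordinal lt); split => //.
have : nat_of_ord v = ((nat_of_ord v).-1./2).*2.+1 \/ nat_of_ord v = ((nat_of_ord v).-1./2).*2.+2.
  move: nz; rewrite -divn2; lia.
by case=> h; [left|right]; apply: ord_inj; rewrite ?vAE ?vBE /=.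
Qed.

Lemma in_edges n (x y : 'I_(2*n).+1) :
  x != y -> friendship x y -> [set x; y] \in edges (@friendship n).
Proof.
move=> nxy fxy; apply/imset2P; apply: (Imset2spec (x1:=x) (x2:=y)) => //.
by rewrite inE nxy fxy.
Qed.

Lemma vAB_neq n (i : 'I_n) : vA n i != vB n i.
Proof. by apply/eqP => /(congr1 (@nat_of_ord _)); rewrite vAE vBE; lia. Qed.

Lemma gE_in n (t : 'I_n * 'I_3) : gE t \in [set gE t | t in [set: 'I_n * 'I_3]].
Proof. by apply: imset_f; rewrite in_setT. Qed.

Lemma edgesE n : edges (@friendship n) = [set gE t | t in [set: 'I_n * 'I_3]].
Proof.
apply/setP => S; apply/idP/idP.
- case/imset2P => x y _; rewrite !inE /= => /andP[nxy fxy] ->.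
  move: fxy; rewrite /friendship nxy /=.
  have [x0|x0] := eqVneq (val x) 0.
    have ex : x = ord0 by apply: val_inj.
    have y0 : val y != 0 by apply: contra nxy; rewrite ex => /eqP h; apply/eqP/val_inj.
    have [i [_ [->|->]]] := vdecomp y0; move=> _; rewrite ex.
      exact: (gE_in (i, @Ordinal 3 0 isT)).
    exact: (gE_in (i, @Ordinal 3 1 isT)).
  have [y0|y0] := eqVneq (val y) 0.
    have ey : y = ord0 by apply: val_inj.
    have [i [_ [->|->]]] := vdecomp x0; move=> _; rewrite ey setUC.
      exact: (gE_in (i, @Ordinal 3 0 isT)).
    exact: (gE_in (i, @Ordinal 3 1 isT)).
  move=> /= /eqP htri.
  have [i [hi hx]] := vdecomp x0.
  have [j [hj hy]] := vdecomp y0.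
  have eij : i = j by apply: ord_inj; rewrite hi hj; exact: htri.
  subst j.
  case: hx => ex; case: hy => ey; rewrite ex ey in nxy *; rewrite ?eqxx // in nxy.
    exact: (gE_in (i, @Ordinal 3 2 isT)).
  rewrite setUC; exact: (gE_in (i, @Ordinal 3 2 isT)).
- case/imsetP => [[i [[|[|[|j]]] hj]]] _ -> //=; apply: in_edges.
  + by rewrite -val_eqE /= vAE.
  + by rewrite /friendship -val_eqE /= vAE.
  + by rewrite -val_eqE /= vBE.
  + by rewrite /friendship -val_eqE /= vBE.
  + exact: vAB_neq.
  + change (friendship (vA n i) (vB n i)).
    rewrite /friendship vAB_neq vAE vBE /=.
    rewrite -!divn2; apply/eqP; lia.
Qed.

Lemma big_set2 (R : Type) (idx : R) (op : Monoid.com_law idx) (T : finType)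
  (F : T -> R) (u w : T) : u != w ->
  \big[op/idx]_(v in [set u; w]) F v = op (F u) (F w).
Proof. by move=> nuw; rewrite big_setU1 ?big_set1 // inE. Qed.

Lemma ord0_vA n (i : 'I_n) : (ord0 : 'I_(2*n).+1) != vA n i.
Proof. by apply/eqP => /(congr1 (@nat_of_ord _)); rewrite vAE. Qed.
Lemma ord0_vB n (i : 'I_n) : (ord0 : 'I_(2*n).+1) != vB n i.
Proof. by apply/eqP => /(congr1 (@nat_of_ord _)); rewrite vBE. Qed.

Lemma gE_key n (i : 'I_n) (j : 'I_3) :
  (ord0 \in gE (i, j), \sum_(v in gE (i, j)) nat_of_ord v) =
  match nat_of_ord j with
  | 0 => (true, i.*2.+1) | 1 => (true, i.*2.+2)
  | _ => (false, i.*2.+1 + i.*2.+2) end.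
Proof.
case: j => [[|[|[|j]]] hj] //=.
- by rewrite /gE /= big_set2 ?ord0_vA // vAE setU11.
- by rewrite /gE /= big_set2 ?ord0_vB // vBE setU11.
- rewrite /gE /= big_set2 ?vAB_neq // vAE vBE !inE.
  by rewrite (negbTE (ord0_vA i)) (negbTE (ord0_vB i)).
Qed.

Lemma gE_inj n : {in [set: 'I_n * 'I_3] &, injective (@gE n)}.
Proof.
move=> [i1 j1] [i2 j2] _ _ h.
have := gE_key i1 j1; rewrite h gE_key; clear h.
case: j1 => [[|[|[|j1]]] h1] //=; case: j2 => [[|[|[|j2]]] h2] //= [e].
all: by apply/eqP; rewrite xpair_eqE; apply/andP; split; apply/eqP; apply: ord_inj; rewrite /=; lia.


Qed.

Lemma ecount n (l : 'I_(2*n).+1 -> A) a :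
  #|[set S in edges (@friendship n) | (\sum_(v in S) l v)%R == a]| =
  ec (l ord0) (pv l) a.
Proof.
rewrite card_filter edgesE big_imset; last exact: gE_inj.
transitivity (\sum_(i < n) \sum_(j < 3) (((\sum_(v in gE (i, j)) l v)%R == a) : nat)).
  rewrite pair_big; apply: eq_big => [[i j]|[i j] _]; by rewrite ?in_setT.
rewrite /ec /pv sum_mkseq; apply: eq_bigr => i _.
rewrite !big_ord_recl big_ord0 addn0 addnA /gE /=.
rewrite !big_set2 ?ord0_vA ?ord0_vB ?vAB_neq //.
Qed.

Definition mkl n (c : A) (p : seq (A * A)) : 'I_(2*n).+1 -> A :=
  fun v => if nat_of_ord v == 0 then c
           else if odd v then (nth (0%R : A, 0%R : A) p (v.-1./2)).1
           else (nth (0%R : A, 0%R : A) p (v.-1./2)).2.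

Lemma pv_mkl n (c : A) (p : seq (A * A)) : size p = n -> pv (@mkl n c p) = p.
Proof.
move=> sp; apply: (@eq_from_nth _ (0%R : A, 0%R : A)); rewrite size_mkseq // => i hi.
rewrite nth_mkseq // /mkl /vA /vB !inordK; try lia.
rewrite /= odd_double /=.
have -> : (i.*2)./2 = i by rewrite -divn2; lia.
rewrite uphalf_double.
by case: (nth _ p i).
Qed.

Definition bal (F : A -> nat) := forall a1 a2, F a1 <= (F a2).+1.

Lemma cordialP n : cordial A (@friendship n) <->
  exists c p, size p = n /\ bal (vc c p) /\ bal (ec c p).
Proof.
split.
- case=> l [h1 h2]; exists (l ord0), (pv l); split; first by rewrite size_mkseq.
  split => a1 a2; [have := h1 a1 a2; rewrite !vcount // | have := h2 a1 a2; rewrite !ecount //].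
- case=> c [p [sp [h1 h2]]]; exists (@mkl n c p); split => a1 a2.
  + by rewrite !vcount pv_mkl //; apply: h1.
  + by rewrite !ecount pv_mkl //; apply: h2.
Qed.
End Counts.


Section Gen.
Variable A : finZmodType.

Lemma size_ie : size (index_enum A) = #|A|.
Proof. by rewrite cardT enumT. Qed.

Lemma block (c : A) p b k1 k2 :
  (forall a, \sum_(q <- b) ((q.1 == a) + (q.2 == a)) = k1) ->
  (forall a, \sum_(q <- b) ((c + q.1 == a)%R + (c + q.2 == a)%R + (q.1 + q.2 == a)%R) = k2) ->
  bal (vc c p) -> bal (ec c p) -> bal (vc c (p ++ b)) /\ bal (ec c (p ++ b)).
Proof.
move=> hb1 hb2 h1 h2; split => a1 a2.
- have := h1 a1 a2; rewrite /vc !big_cat /= !hb1; lia.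
- have := h2 a1 a2; rewrite /ec !big_cat /= !hb2; lia.
Qed.

Lemma sum_inj1' (h : A -> A) (a : A) :
  injective h -> \sum_(x : A) (h x == a : nat) = 1.
Proof. exact: sum_inj1. Qed.

Definition bodd : seq (A * A) := map (fun x => (x, x)) (index_enum A).

Lemma ext_odd (c : A) p : injective (fun x : A => (x + x)%R) ->
  bal (vc c p) -> bal (ec c p) -> bal (vc c (p ++ bodd)) /\ bal (ec c (p ++ bodd)).
Proof.
move=> dinj; apply: (block (k1 := 2) (k2 := 3)) => a; rewrite /bodd big_map /=.
- by rewrite big_split /= sum_eq1.
- rewrite !big_split /= (sum_inj1 (h := fun x => (c + x)%R)) //; last exact: addrI.
  by rewrite (sum_inj1 (h := fun x : A => (x + x)%R)).
Qed.

Definition beven (u : A) : seq (A * A) :=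
  map (fun x => (x, x)) (index_enum A) ++ map (fun x => (x, x + u)%R) (index_enum A).

Lemma ext_even (c u : A) p :
  (forall a : A, \sum_(x : A) ((x + x == a)%R + (x + (x + u) == a)%R) = 2) ->
  bal (vc c p) -> bal (ec c p) ->
  bal (vc c (p ++ beven u)) /\ bal (ec c (p ++ beven u)).
Proof.
move=> hc; apply: (block (k1 := 4) (k2 := 6)) => a; rewrite /beven big_cat !big_map /=.
- rewrite !big_split /= !sum_eq1 (sum_inj1 (h := fun x => (x + u)%R)) //.
  exact: addIr.
- rewrite !big_split /= (sum_inj1 (h := fun x => (c + x)%R)); last exact: addrI.
  rewrite (sum_inj1 (h := fun x => (c + (x + u))%R)); last first.
    by move=> x y /addrI /addIr.
  have := hc a; rewrite big_split /= => e; by rewrite addnACA e.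
Qed.

Lemma bal_nil (c : A) : bal (vc c [::]) /\ bal (ec c [::]).
Proof.
split => a1 a2; rewrite /vc /ec !big_nil //.
by case: (c == a1); case: (c == a2).
Qed.

Lemma bal_const (F : A -> nat) t :
  bal F -> \sum_(a : A) F a = t * #|A| -> forall a, F a = t.
Proof.
move=> hb hs a0.
have e : \sum_(a : A) F a = F a0 + \sum_(a | a != a0) F a by rewrite (bigD1 a0).
have cc : #|[pred a | a != a0]| = #|A|.-1 by rewrite -(cardC1 a0).
have pos : 0 < #|A| by apply/card_gt0P; exists a0.
case: (ltngtP (F a0) t) => // h.
- have : \sum_(a | a != a0) F a <= \sum_(a | a != a0) t.
    by apply: leq_sum => a _; have := hb a a0; lia.
  rewrite sum_nat_const cc; nia.
- have : \sum_(a | a != a0) t <= \sum_(a | a != a0) F a.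
    by apply: leq_sum => a _; have := hb a0 a; lia.
  rewrite sum_nat_const cc; nia.
Qed.

Lemma ec_total (c : A) p : \sum_(a : A) ec c p a = 3 * size p.
Proof.
rewrite /ec exchange_big /=; elim: p => [|q p IH]; first by rewrite big_nil.
rewrite big_cons IH /= !big_split /= !sum_eq1'; lia.
Qed.

Lemma sum_pred_eq (P : pred A) (z : A) : \sum_(a | P a) (z == a : nat) = P z.
Proof.
rewrite big_mkcond (bigD1 z) //= eqxx big1 ?addn0; first by case: (P z).
by move=> a /negbTE; rewrite eq_sym => ->; case: (P a).
Qed.

Lemma ec_pred (P : pred A) (c : A) p : \sum_(a | P a) ec c p a =
  \sum_(q <- p) (P (c + q.1)%R + P (c + q.2)%R + P (q.1 + q.2)%R).
Proof.
rewrite /ec exchange_big /=; apply: eq_bigr => q _.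
by rewrite !big_split /= !sum_pred_eq.
Qed.
End Gen.


Lemma Zadd m (x y : Zmod m) : nat_of_ord (x + y)%R = (nat_of_ord x + nat_of_ord y) %% m.-1.+1.
Proof. by []. Qed.

Lemma dbl_inj m : odd m -> injective (fun x : Zmod m => (x + x)%R).
Proof.
move=> om.
set N := m.-1.+1.
have oN : odd N by rewrite /N prednK //; move: om; case: (m) => //.
have key : forall x : Zmod m, nat_of_ord x = (nat_of_ord (x + x)%R * N.+1./2) %% N.
  move=> x; rewrite Zadd -/N modnMml.
  have h2 : N.+1./2 + N.+1./2 = N + 1.
    have : N %% 2 = 1 by rewrite modn2 oN.
    rewrite -divn2; lia.
  have -> : (nat_of_ord x + nat_of_ord x) * N.+1./2 = nat_of_ord x * N + nat_of_ord x by nia.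
  rewrite modnMDl modn_small //; exact: ltn_ord.
move=> x y /= e; apply: ord_inj; by rewrite key e -key.
Qed.

Lemma sum_nat_eq a N : a < N -> \sum_(0 <= j < N) (j == a : nat) = 1.
Proof.
move=> ha; rewrite big_mkord -(sum_eq1 (Ordinal ha)).
by apply: eq_bigr => j _.
Qed.

Lemma pairs_eq h a : \sum_(0 <= j < h) ((j + j == a : nat) + (j + j + 1 == a : nat)) =
  \sum_(0 <= j < h + h) (j == a : nat).
Proof.
elim: h => [|h IH]; first by rewrite !big_geq.
rewrite big_nat_recr //= IH.
have -> : h.+1 + h.+1 = (h + h).+1.+1 by lia.
rewrite big_nat_recr //= big_nat_recr //= addnA.
have -> : h + h + 1 = (h + h).+1 by lia.
by [].
Qed.

Lemma cnt_nat h a : a < h + h ->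
  \sum_(0 <= j < h + h) (((j + j) %% (h + h) == a : nat) + ((j + j + 1) %% (h + h) == a : nat)) = 2.
Proof.
move=> ha.
rewrite (big_cat_nat (n := h)) //=; last exact: leq_addr.
rewrite (big_addn 0 (h + h) h) addnK.
have e1 : \sum_(0 <= j < h) (((j + j) %% (h + h) == a : nat) + ((j + j + 1) %% (h + h) == a : nat))
   = \sum_(0 <= j < h) ((j + j == a : nat) + (j + j + 1 == a : nat)).
  apply: eq_big_nat => j /andP[_ hj]; rewrite !modn_small //; lia.
have e2 : \sum_(0 <= j < h) (((j + h + (j + h)) %% (h + h) == a : nat) + ((j + h + (j + h) + 1) %% (h + h) == a : nat))
   = \sum_(0 <= j < h) ((j + j == a : nat) + (j + j + 1 == a : nat)).
  apply: eq_big_nat => j /andP[_ hj].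
  have -> : j + h + (j + h) = (j + j) + (h + h) by lia.
  have -> : j + j + (h + h) + 1 = (j + j + 1) + (h + h) by lia.
  rewrite !modnDr !modn_small //; lia.
by rewrite e1 e2 pairs_eq sum_nat_eq.
Qed.

Lemma ordeqE n (x y : 'I_n) : (x == y) = (nat_of_ord x == nat_of_ord y).
Proof. by []. Qed.

Lemma even_mod2 m : ~~ odd m -> m %% 2 = 0.
Proof. by rewrite modn2 => /negbTE ->. Qed.

Lemma even_cnt m : 1 <= m -> ~~ odd m -> forall a : Zmod m,
  \sum_(x : Zmod m) ((x + x == a)%R + (x + (x + inord 1) == a)%R) = 2.
Proof.
move=> m1 em a.
have hN : m.-1.+1 = m./2 + m./2.
  move: (even_mod2 em) m1; rewrite -divn2; lia.
have u1 : nat_of_ord (inord 1 : Zmod m) = 1.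
  rewrite inordK // hN; move: (even_mod2 em) m1; rewrite -divn2; lia.
transitivity (\sum_(x < m.-1.+1) ((((x + x) %% (m.-1.+1)) == a : nat)
                + ((x + x + 1) %% (m.-1.+1) == a : nat))).
  apply: eq_bigr => x _; rewrite !ordeqE !Zadd u1 modnDmr addnA //.
rewrite -(big_mkord xpredT (fun j => (((j + j) %% (m.-1.+1)) == a : nat)
                + ((j + j + 1) %% (m.-1.+1) == a : nat))).
have := ltn_ord a; move: (nat_of_ord a) => b hb.
rewrite hN in hb *; exact: cnt_nat.
Qed.

Lemma odd_Zadd m : 1 <= m -> ~~ odd m -> forall x y : Zmod m,
  odd (nat_of_ord (x + y)%R) = odd (nat_of_ord x) (+) odd (nat_of_ord y).
Proof.
move=> m1 em x y; rewrite Zadd odd_mod ?oddD //.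
by rewrite prednK // (negbTE em).
Qed.

Lemma sum_odd_nat h : \sum_(0 <= j < h + h) (odd j : nat) = h.
Proof.
elim: h => [|h IH]; first by rewrite big_geq.
have -> : h.+1 + h.+1 = (h + h).+1.+1 by lia.
rewrite big_nat_recr //= big_nat_recr //= IH oddD addbb /=; lia.
Qed.


Lemma cord0 m : Zm_cordial_friendship m 0.
Proof.
apply/cordialP; exists 0%R, [::]; split => //; exact: bal_nil.
Qed.

Lemma card_Zmod m : 1 <= m -> #|Zmod m| = m.
Proof. by move=> m1; rewrite card_ord prednK. Qed.

Lemma ext_odd_Z m : odd m -> forall n,
  Zm_cordial_friendship m n -> Zm_cordial_friendship m (n + m).
Proof.
move=> om n /cordialP [c [p [sp [h1 h2]]]]; apply/cordialP.
have m1 : 1 <= m by case: (m) om.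
exists c, (p ++ bodd (Zmod m)); split.
  by rewrite size_cat size_map size_ie card_Zmod // sp.
exact: ext_odd (dbl_inj om) h1 h2.
Qed.

Lemma ext_even_Z m : 1 <= m -> ~~ odd m -> forall n,
  Zm_cordial_friendship m n -> Zm_cordial_friendship m (n + 2 * m).
Proof.
move=> m1 em n /cordialP [c [p [sp [h1 h2]]]]; apply/cordialP.
exists c, (p ++ beven (inord 1 : Zmod m)); split.
  by rewrite size_cat size_cat !size_map size_ie card_Zmod // sp; lia.
exact: ext_even (even_cnt m1 em) h1 h2.
Qed.

Lemma all_from m k : 1 <= k ->
  (forall n, Zm_cordial_friendship m n -> Zm_cordial_friendship m (n + k)) ->
  ((forall n : nat, Zm_cordial_friendship m n) <->
   (forall n : nat, (1 <= n <= k - 1)%N -> Zm_cordial_friendship m n)).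
Proof.
move=> k1 ext; split; first by move=> H n _.
move=> H; elim/ltn_ind => n IH.
case: n IH => [|n] IH; first exact: cord0.
case: (ltnP n (k - 1)) => hn; first by apply: H; lia.
have := ext _ (IH (n.+1 - k) ltac:(lia)).
by rewrite subnK //; lia.
Qed.

Lemma part_c m : 1 <= m -> ~~ odd m -> ~~ (4 %| m)%N -> ~ Zm_cordial_friendship m m.
Proof.
move=> m1 em n4 /cordialP [c [p [sp [h1 h2]]]].
have hN : m.-1.+1 = m./2 + m./2.
  move: (even_mod2 em) m1; rewrite -divn2; lia.
have oh : odd (m./2).
  case oh: (odd m./2) => //.
  move: n4 (even_mod2 em) (even_mod2 (negbT oh)); rewrite -!divn2; lia.
have all3 : forall a, ec c p a = 3.
  by apply: bal_const h2 _; rewrite ec_total card_Zmod // sp.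
have S1 : \sum_(a : Zmod m | odd (nat_of_ord a)) ec c p a = 3 * m./2.
  transitivity (\sum_(a : Zmod m) ((odd (nat_of_ord a) : nat) * 3)).
    rewrite big_mkcond; apply: eq_bigr => a _; rewrite all3; by case: (odd _).
  rewrite -big_distrl /= mulnC.
  rewrite -(big_mkord xpredT (fun j => (odd j : nat))) hN sum_odd_nat //.
have S2 : ~~ odd (\sum_(a : Zmod m | odd (nat_of_ord a)) ec c p a).
  rewrite (ec_pred (fun a : Zmod m => odd (nat_of_ord a))).
  elim: (p) => [|q r IH]; first by rewrite big_nil.
  rewrite big_cons oddD (negbTE IH) addbF /= !odd_Zadd //.
  by case: (odd (nat_of_ord c)); case: (odd (nat_of_ord q.1)); case: (odd (nat_of_ord q.2)).
by move: S2; rewrite S1 oddM oh.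
Qed.


Unset Implicit Arguments.

Theorem theorem8p3 (m : nat) (hm : (1 <= m)%N) :
  (odd m ->
     Zm_cordial_friendship m m /\
     ((forall n : nat, Zm_cordial_friendship m n) <->
      (forall n : nat, (1 <= n <= m - 1)%N -> Zm_cordial_friendship m n))) /\
  (~~ odd m ->
     Zm_cordial_friendship m (2 * m) /\
     ((forall n : nat, Zm_cordial_friendship m n) <->
      (forall n : nat, (1 <= n <= 2 * m - 1)%N -> Zm_cordial_friendship m n))) /\
  (~~ odd m -> ~~ (4 %| m)%N -> ~ Zm_cordial_friendship m m).
Proof.
split; [|split].
- move=> om; split; first by have := ext_odd_Z om (cord0 m); rewrite add0n.
  exact: all_from hm (ext_odd_Z om).
- move=> em; split; first by have := ext_even_Z hm em (cord0 m); rewrite add0n.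
  apply: all_from; [lia | exact: ext_even_Z hm em].
- exact: part_c hm.
Qed.
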